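(* Let $G$ be a connected, regular, uniformly dense finite simple graph. Then either $G$ has a perfect matching, or $G\setminus v$ has a perfect matching for every vertex $v\in V(G)$.
   Context: For $A\subseteq E$, $c(A)$ is the number of components of $(V,A)$, $\operatorname{rank}(A)=|V|-c(A)$, $\rho(A)=|A|/\operatorname{rank}(A)$; $G$ is uniformly dense if $\rho(A)\le\rho(E)$ for all nonempty $A\subseteq E$. A perfect matching is a set of edges covering every vertex exactly once; $G\setminus v$ is $G$ with vertex $v$ and its incident edges removed. *)

(* Defs.v *)
From mathcomp Require Import all_boot all_order all_algebra.
Set Implicit Arguments. Unset Strict Implicit. Unset Printing Implicit Defensive.
Import Order.TTheory GRing.Theory Num.Theory.

(* A finite simple graph on vertex type T is given by its edge set
   E : {set {set T}}, every edge being a 2-element subset of T. *)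
Definition simple_graph (T : finType) (E : {set {set T}}) : Prop :=
  forall e, e \in E -> #|e| = 2.

Definition adj (T : finType) (A : {set {set T}}) : rel T :=
  fun x y => [set x; y] \in A.

Definition ncomp (T : finType) (A : {set {set T}}) : nat :=
  n_comp (adj A) T.

Definition grank (T : finType) (A : {set {set T}}) : nat :=
  #|T| - ncomp A.

Definition rho (T : finType) (A : {set {set T}}) : rat :=
  (#|A|%:R / (grank A)%:R)%R.

Definition uniformly_dense (T : finType) (E : {set {set T}}) : Prop :=
  forall A : {set {set T}}, A \subset E -> A != set0 -> (rho A <= rho E)%R.

Definition connected_graph (T : finType) (E : {set {set T}}) : Prop :=
  forall x y : T, connect (adj E) x y.

Definition deg (T : finType) (E : {set {set T}}) (v : T) : nat :=
  #|[set e in E | v \in e]|.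

Definition regular (T : finType) (E : {set {set T}}) : Prop :=
  exists k, forall v : T, deg E v = k.

Definition perfect_matching (T : finType) (V : {set T}) (E M : {set {set T}}) : Prop :=
  M \subset E /\ forall x, x \in V -> #|[set e in M | x \in e]| = 1.

Definition del_vertex_edges (T : finType) (E : {set {set T}}) (v : T) : {set {set T}} :=
  [set e in E | v \notin e].

(* Main.v *)
Require Import Defs.
From mathcomp Require Import all_boot all_order all_algebra.
From mathcomp Require Import zify.
Set Implicit Arguments. Unset Strict Implicit. Unset Printing Implicit Defensive.

(* Proof strategy: Lovasz's proof of Tutte's theorem (edge-maximal counterexample,
   with perfect matchings represented as fixed-point-free involutions), combined
   with the density inequality e(P) >= rho (|P| - 1) applied to the partition
   into singletons of a Tutte set and cliques. *)

Definition invo (T : finType) (V : {set T}) (m : T -> T) : Prop :=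
  [/\ forall v, v \notin V -> m v = v, forall v, v \in V -> m v != v
    & forall v, m (m v) = v].

Definition inv (T : finType) (V : {set T}) (F : {set {set T}}) (m : T -> T) : Prop :=
  invo V m /\ forall v, v \in V -> [set v; m v] \in F.

Lemma invo_in (T : finType) (V : {set T}) m v : invo V m -> v \in V -> m v \in V.
Proof.
case=> h1 h2 h3 vV; apply/negPn/negP => nV.
have e := h1 _ nV; rewrite h3 in e.
by move: (h2 v vV); rewrite -e eqxx.
Qed.

Lemma ab_disj (T : finType) (V : {set T}) (m1 m2 : T -> T) y :
  invo V m1 -> invo V m2 -> y \in V ->
  forall s t, iter s (m1 \o m2) y != m2 (iter t (m1 \o m2) y).
Proof.
move=> h1 h2 yV.
set a := fun i => iter i (m1 \o m2) y.
have aS : forall i, a i.+1 = m1 (m2 (a i)) by move=> i; rewrite /a iterS.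
have aV : forall i, a i \in V.
  elim=> [|i IH]; first exact: yV.
  rewrite [a _]aS.
  by apply: (invo_in h1); apply: (invo_in h2).
have m1K : forall v, m1 (m1 v) = v by case: h1.
have m2K : forall v, m2 (m2 v) = v by case: h2.
have m1a : forall i, m1 (a i.+1) = m2 (a i) by move=> i; rewrite aS m1K.
have c0 : forall s, a s != m2 (a s).
  move=> s; apply/eqP => e; case: h2 => _ h _.
  by move: (h _ (aV s)); rewrite -e eqxx.
have c1 : forall t, a t.+1 != m2 (a t).
  move=> t; apply/eqP => e; case: h1 => _ h _.
  have bV : m2 (a t) \in V by apply: (invo_in h2).
  by move: (h _ bV); rewrite -{1}e m1a eqxx.
suff: forall n s t, (s - t) + (t - s) <= n -> a s != m2 (a t) by move=> H s t; apply: (H _ s t (leqnn _)).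
elim=> [|n IH] s t hn.
  have -> : s = t by lia.
  exact: c0.
case: (ltngtP s t) => [lst|lts|->]; last exact: c0.
-
  case: (eqVneq t s.+1) => [->|ne].
  + apply/negP => /eqP e; have e2 : m2 (a s) = a s.+1 by rewrite e m2K.
    by move: (c1 s); rewrite e2 eqxx.
  + apply/negP => /eqP e.
    have e2 : a t = m2 (a s) by rewrite e m2K.
    have e3 : a s.+1 = m2 (a t.-1).
      by rewrite aS -e2 -m1a; congr (m1 (a _)); lia.
    by move: (IH s.+1 t.-1 ltac:(lia)); rewrite e3 eqxx.
-
  case: (eqVneq s t.+1) => [->|ne]; first exact: c1.
  apply/negP => /eqP e.
  have e3 : a t.+1 = m2 (a s.-1).
    by rewrite aS -e -m1a; congr (m1 (a _)); lia.
  by move: (IH t.+1 s.-1 ltac:(lia)); rewrite e3 eqxx.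
Qed.

Lemma swap (T : finType) (V : {set T}) (F : {set {set T}}) (m1 m2 : T -> T) (x y z : T) :
  invo V m1 -> invo V m2 -> y \in V -> y != x -> y != z -> m1 x = z ->
  [set x; y] \in F -> [set y; z] \in F ->
  (forall v, v \in V -> v != x -> v != z -> [set v; m1 v] \in F) ->
  (forall v, v \in V -> v != y -> v != m2 y -> [set v; m2 v] \in F) ->
  exists m, inv V F m.
Proof.
move=> h1 h2 yV yx yz m1x Fxy Fyz H1 H2.
have m1K : forall v, m1 (m1 v) = v by case: h1.
have m2K : forall v, m2 (m2 v) = v by case: h2.
have m1inj : injective m1 := can_inj m1K.
have m2inj : injective m2 := can_inj m2K.
have m1z : m1 z = x by rewrite -m1x m1K.
have finj : injective (m1 \o m2).
  by apply: (@can_inj _ _ _ (m2 \o m1)) => v /=; rewrite m1K m2K.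
set f := m1 \o m2 in finj.
pose a := fun i => iter i f y.
have aS : forall i, a i.+1 = m1 (m2 (a i)) by move=> i; rewrite /a iterS.
have aV : forall i, a i \in V.
  elim=> [|i IH]; first exact: yV.
  rewrite [a _]aS.
  by apply: (invo_in h1); apply: (invo_in h2).
have bV : forall i, m2 (a i) \in V by move=> i; apply: (invo_in h2).
have m1a : forall i, m1 (a i.+1) = m2 (a i) by move=> i; rewrite aS m1K.
have ab : forall s t, a s != m2 (a t) := ab_disj h1 h2 yV.
pose p := order f y.
have p0 : 0 < p := order_gt0 f y.
have ap : a p = y := iter_order finj y.
have ainj : forall j, 0 < j < p -> a j != y.
  move=> j /andP[j0 jp]; apply/eqP => e.
  have := findex_iter jp; change (findex f y (a j) = j -> False).
  by rewrite e findex0; lia.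
have xz : forall v, (m1 v == x) || (m1 v == z) = (v == x) || (v == z).
  move=> v; have e1 : (m1 v == x) = (v == z) by rewrite -m1z (inj_eq m1inj).
  have e2 : (m1 v == z) = (v == x) by rewrite -m1x (inj_eq m1inj).
  by rewrite e1 e2 orbC.
have a0 : a 0 = y by [].
have aNxz : forall i, (forall j, j < i -> ~~ ((m2 (a j) == x) || (m2 (a j) == z))) ->
    ~~ ((a i == x) || (a i == z)).
  case=> [|i] hj; first by rewrite a0 (negbTE yx) (negbTE yz).
  by rewrite aS xz; apply: hj.
case: (boolP [exists i : 'I_p, (m2 (a i) == x) || (m2 (a i) == z)]) => [hit|nohit].
-
  have exP : exists i, (i < p) && ((m2 (a i) == x) || (m2 (a i) == z)).
    by case/existsP: hit => i hi; exists i; rewrite ltn_ord hi.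
  case: (ex_minnP exP) => i /andP[ip hi] imin.
  have nb : forall j, j < i -> ~~ ((m2 (a j) == x) || (m2 (a j) == z)).
    move=> j ji; apply/negP => hj.
    have := imin j; rewrite hj andbT => /(_ (ltn_trans ji ip)); lia.
  pose c := m2 (a i).
  have yNxz : ~~ ((y == x) || (y == z)) by rewrite (negbTE yx) (negbTE yz).
  have yc : y != c.
    by apply/eqP => e; move: yNxz; rewrite e /c hi.
  pose K := [set v | [exists j : 'I_i.+1, (v == a j) || (v == m2 (a j))]].
  have KV : forall v, v \in K -> v \in V.
    by move=> v; rewrite inE => /existsP[j /orP[] /eqP ->].
  have Ky : y \in K by rewrite inE; apply/existsP; exists ord0; rewrite a0 eqxx.
  have Kc : c \in K by rewrite inE; apply/existsP; exists ord_max; rewrite eqxx orbT.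
  have Km2y : m2 y \in K by rewrite inE; apply/existsP; exists ord0; rewrite a0 eqxx orbT.
  have Km2 : forall v, v \in K -> m2 v \in K.
    move=> v; rewrite !inE => /existsP[j hj]; apply/existsP; exists j.
    by rewrite (inj_eq m2inj) -{1}(m2K (a j)) (inj_eq m2inj) orbC.
  have Key : forall v, v \in K -> v != y -> v != c ->
      [/\ m1 v \in K, m1 v != y, m1 v != c & ~~ ((v == x) || (v == z))].
    move=> v; rewrite inE => /existsP[[j ji] /= /orP[] /eqP ->] vy vc.
    + case: j ji vy vc => [|j] ji vy vc; first by rewrite a0 eqxx in vy.
      have ji' : j < i by [].
      rewrite m1a; split.
      * by rewrite inE; apply/existsP; exists (Ordinal (ltnW ji' : j < i.+1)); rewrite eqxx orbT.
      * by rewrite eq_sym -a0 ab.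
      * apply/eqP => e; move: (nb j ji'); rewrite e /c hi.
        by [].
      * by apply: aNxz => k kj; apply: nb; apply: leq_trans kj _.
    + have ji' : j < i.
        rewrite ltn_neqAle -ltnS ji andbT; apply/eqP => e.
        by move: vc; rewrite e eqxx.
      rewrite -aS; split.
      * by rewrite inE; apply/existsP; exists (Ordinal (ji' : j.+1 < i.+1)); rewrite eqxx.
      * by apply: ainj; rewrite /= (leq_ltn_trans ji' ip).
      * exact: ab.
      * exact: nb.
  pose m := fun v => if v == y then c else if v == c then y else if v \in K then m1 v else m2 v.
  have cV : c \in V := bV i.
  have mK : forall v, m (m v) = v.
    move=> v; rewrite /m; case: (eqVneq v y) => [->|vy].
      by rewrite eq_sym (negbTE yc) eqxx.
    case: (eqVneq v c) => [->|vc]; first by rewrite eqxx.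
    case: (boolP (v \in K)) => vK.
      by case: (Key v vK vy vc) => mK1 mK2 mK3 _; rewrite (negbTE mK2) (negbTE mK3) mK1 m1K.
    have m2K' : m2 v \notin K by apply: contra vK => /Km2; rewrite m2K.
    have -> : (m2 v == y) = false by apply/negbTE; apply: contraNneq m2K' => ->.
    have -> : (m2 v == c) = false by apply/negbTE; apply: contraNneq m2K' => ->.
    by rewrite (negbTE m2K') m2K.
  exists m; split; [split|].
  + move=> v vV; rewrite /m.
    have -> : (v == y) = false by apply/negbTE; apply: contraNneq vV => ->.
    have -> : (v == c) = false by apply/negbTE; apply: contraNneq vV => ->.
    have -> : (v \in K) = false by apply/negbTE; apply: contra vV; apply: KV.
    by case: h2 => -> .
  + move=> v vV; rewrite /m; case: (eqVneq v y) => [->|vy]; first by rewrite eq_sym.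
    case: (eqVneq v c) => [->|vc]; first by [].
    by case: ifP => _; [case: h1 => _ -> | case: h2 => _ ->].
  + exact: mK.
  + move=> v vV; rewrite /m; case: (eqVneq v y) => [->|vy].
      case/orP: hi => /eqP ce; rewrite /c ce //.
      by rewrite setUC.
    case: (eqVneq v c) => [->|vc].
      case/orP: hi => /eqP ce; rewrite /c ce //.
      by rewrite setUC.
    case: (boolP (v \in K)) => vK.
      case: (Key v vK vy vc) => _ _ _; rewrite negb_or => /andP[vx vz].
      exact: H1.
    apply: H2 => //; apply: contraNneq vK => ->; exact: Km2y.
-
  rewrite negb_exists in nohit; move/forallP: nohit => nohit.
  have nb : forall j, j < p -> ~~ ((m2 (a j) == x) || (m2 (a j) == z)).
    by move=> j jp; apply: (nohit (Ordinal jp)).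
  pose K := [set v | [exists j : 'I_p, (v == a j) || (v == m2 (a j))]].
  have KV : forall v, v \in K -> v \in V.
    by move=> v; rewrite inE => /existsP[j /orP[] /eqP ->].
  have Ky : y \in K by rewrite inE; apply/existsP; exists (Ordinal p0); rewrite a0 eqxx.
  have Km2y : m2 y \in K by rewrite inE; apply/existsP; exists (Ordinal p0); rewrite a0 eqxx orbT.
  have Km2 : forall v, v \in K -> m2 v \in K.
    move=> v; rewrite !inE => /existsP[j hj]; apply/existsP; exists j.
    by rewrite (inj_eq m2inj) -{1}(m2K (a j)) (inj_eq m2inj) orbC.
  have Kxz : forall v, v \in K -> ~~ ((v == x) || (v == z)).
    move=> v; rewrite inE => /existsP[[j jp] /= /orP[] /eqP ->].
      by apply: aNxz => k kj; apply: nb; apply: ltn_trans jp.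
    exact: nb.
  have Km1 : forall v, v \in K -> m1 v \in K.
    move=> v; rewrite inE => /existsP[[j jp] /= /orP[] /eqP ->].
    + case: j jp => [|j] jp.
      * have pe : p = p.-1.+1 by lia.
        have : m1 (a p) = m2 (a p.-1) by rewrite {1}pe m1a.
        rewrite ap a0 => ->.
        rewrite inE; apply/existsP; have pp : p.-1 < p by lia. exists (Ordinal pp); rewrite eqxx orbT //.
      * rewrite m1a inE; apply/existsP; exists (Ordinal (ltnW jp)); rewrite eqxx orbT //.
    + rewrite -aS; case: (ltnP j.+1 p) => jp'.
        rewrite inE; apply/existsP; exists (Ordinal jp'); rewrite eqxx //.
      have -> : j.+1 = p by lia.
      by rewrite ap.
  pose m := fun v => if v \in K then m1 v else m2 v.
  have mK : forall v, m (m v) = v.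
    move=> v; rewrite /m; case: (boolP (v \in K)) => vK.
      by rewrite Km1 // m1K.
    have m2K' : m2 v \notin K by apply: contra vK => /Km2; rewrite m2K.
    by rewrite (negbTE m2K') m2K.
  exists m; split; [split|].
  + move=> v vV; rewrite /m.
    have -> : (v \in K) = false by apply/negbTE; apply: contra vV; apply: KV.
    by case: h2 => -> .
  + move=> v vV; rewrite /m.
    by case: ifP => _; [case: h1 => _ -> | case: h2 => _ ->].
  + exact: mK.
  + move=> v vV; rewrite /m; case: (boolP (v \in K)) => vK.
      by move: (Kxz v vK); rewrite negb_or => /andP[vx vz]; apply: H1.
    apply: H2 => //; first by apply: contraNneq vK => ->.
    by apply: contraNneq vK => ->.
Qed.

Definition valid (T : finType) (V : {set T}) (F : {set {set T}}) : Prop :=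
  forall e, e \in F -> (#|e| == 2) && (e \subset V).

Definition univ (T : finType) (V : {set T}) (F : {set {set T}}) : {set T} :=
  [set u in V | [forall w in V, (w != u) ==> ([set u; w] \in F)]].

Definition transb (T : finType) (V : {set T}) (F : {set {set T}}) : bool :=
  [forall a, forall b, forall c,
    [&& a \in V :\: univ V F, b \in V :\: univ V F, c \in V :\: univ V F,
        [set a; b] \in F, [set b; c] \in F & a != c] ==> ([set a; c] \in F)].

Definition nonedges (T : finType) (V : {set T}) (F : {set {set T}}) : nat :=
  #|[set e : {set T} | [&& e \subset V, #|e| == 2 & e \notin F]]|.

Lemma nonedges_add (T : finType) (V : {set T}) (F : {set {set T}}) (e : {set T}) :
  e \subset V -> #|e| = 2 -> e \notin F -> nonedges V (e |: F) < nonedges V F.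
Proof.
move=> eV e2 eF; apply: proper_card; apply/properP; split.
  apply/subsetP => e'; rewrite !inE => /and3P[-> -> ]; by rewrite negb_or => /andP[_ ->].
by exists e; rewrite !inE ?eV ?e2 ?eF ?eqxx.
Qed.

Lemma in_pair (T : finType) (v u a c : T) : [set v; u] = [set a; c] -> (v == a) || (v == c).
Proof. by move=> e; have := set21 v u; rewrite e in_set2. Qed.

Lemma valid_add (T : finType) (V : {set T}) (F : {set {set T}}) a c :
  valid V F -> a \in V -> c \in V -> a != c -> valid V ([set a; c] |: F).
Proof.
move=> vF aV cV ac e; rewrite in_setU1 => /orP[/eqP ->|/vF //].
rewrite cards2 ac eqxx /=; apply/subsetP => v; rewrite in_set2.
by case/orP => /eqP ->.
Qed.

Lemma maximal (T : finType) (V : {set T}) (F : {set {set T}}) :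
  valid V F ->
  (forall F' : {set {set T}}, F \subset F' -> valid V F' -> transb V F' -> exists m, inv V F' m) ->
  exists m, inv V F m.
Proof.
move=> vF H.
suff: forall n F, nonedges V F <= n -> valid V F ->
  (forall F' : {set {set T}}, F \subset F' -> valid V F' -> transb V F' -> exists m, inv V F' m) ->
  exists m, inv V F m by move=> /(_ _ F (leqnn _)); apply.
clear vF H F; elim=> [|n IH] F hn vF H.
- case: (boolP (transb V F)) => tr; first by apply: H.
  suff: nonedges V F > 0 by rewrite lt0n; move: hn; rewrite leqn0 => ->.
  move: tr; rewrite negb_forall => /existsP[a]; rewrite negb_forall => /existsP[b].
  rewrite negb_forall => /existsP[c]; rewrite negb_imply => /andP[HH acF].
  case/and5P: HH => aV _ cV _ /andP[_ ac].
  have aV' : a \in V by move: aV; rewrite inE => /andP[].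
  have cV' : c \in V by move: cV; rewrite inE => /andP[].
  rewrite card_gt0; apply/set0Pn; exists [set a; c]; rewrite !inE cards2 ac acF /= andbT.
  by apply/subsetP => v; rewrite in_set2 => /orP[] /eqP ->.
- case: (boolP (transb V F)) => tr; first by apply: H.
  move: tr; rewrite negb_forall => /existsP[a]; rewrite negb_forall => /existsP[b].
  rewrite negb_forall => /existsP[c]; rewrite negb_imply => /andP[HH acF].
  case/and5P: HH => aV bV cV abF /andP[bcF ac].
  have aV' : a \in V by move: aV; rewrite inE => /andP[].
  have cV' : c \in V by move: cV; rewrite inE => /andP[].
  have bV' : b \in V by move: bV; rewrite inE => /andP[].
  have : exists w, [/\ w \in V, w != b & [set b; w] \notin F].
    move: bV; rewrite !inE bV' andbT /= negb_forall => /existsP[w].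
    rewrite negb_imply => /andP[wV]; rewrite negb_imply => /andP[wb bwF].
    by exists w; split.
  case=> w [wV bw bwF].
  have Hmono : forall F1 : {set {set T}}, F \subset F1 ->
      (forall F' : {set {set T}}, F1 \subset F' -> valid V F' -> transb V F' -> exists m, inv V F' m).
    by move=> F1 s F' s' ; apply: H; apply: subset_trans s s'.
  have [m1 [im1 e1]] : exists m, inv V ([set a; c] |: F) m.
    apply: IH; last by apply: Hmono; apply: subsetUr.
      rewrite -ltnS; apply: leq_trans hn; apply: nonedges_add => //.
        by apply/subsetP => v; rewrite in_set2 => /orP[] /eqP ->.
      by rewrite cards2 ac.
    exact: valid_add.
  have [m2 [im2 e2]] : exists m, inv V ([set b; w] |: F) m.
    apply: IH; last by apply: Hmono; apply: subsetUr.
      rewrite -ltnS; apply: leq_trans hn; apply: nonedges_add => //.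
        by apply/subsetP => v; rewrite in_set2 => /orP[] /eqP ->.
      by rewrite cards2 eq_sym bw.
    by apply: valid_add; rewrite // eq_sym.
  have ab : a != b.
    by have := vF _ abF; rewrite cards2 => /andP[]; case: (a != b).
  have bc : b != c.
    by have := vF _ bcF; rewrite cards2 => /andP[]; case: (b != c).
  have m1K : forall v, m1 (m1 v) = v by case: im1.
  have m2K : forall v, m2 (m2 v) = v by case: im2.
  case: (eqVneq (m1 a) c) => m1a; last first.
    exists m1; split => // v vV; move: (e1 v vV); rewrite in_setU1 => /orP[/eqP e|//].
    exfalso; move: (in_pair e) => /orP[] /eqP ev; rewrite ev in e.
      have : c \in [set a; m1 a] by rewrite e set22.
      rewrite in_set2 => /orP[] /eqP h.
        by move: ac; rewrite h eqxx.
      by move: m1a; rewrite h eqxx.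
    have : a \in [set c; m1 c] by rewrite e set21.
    rewrite in_set2 => /orP[] /eqP h.
      by move: ac; rewrite h eqxx.
    by move: m1a; rewrite h m1K eqxx.
  apply: (@swap _ V F m1 m2 a b c) => //; first by rewrite eq_sym.
  - move=> v vV va vc; move: (e1 v vV); rewrite in_setU1 => /orP[/eqP e|//].
    by move: (in_pair e); rewrite (negbTE va) (negbTE vc).
  - move=> v vV vb vw; move: (e2 v vV); rewrite in_setU1 => /orP[/eqP e|//].
    move: (in_pair e); rewrite (negbTE vb) /= => /eqP ev.
    have : m2 v \in [set b; w] by rewrite -e set22.
    rewrite in_set2 => /orP[] /eqP h.
      by move: vw; rewrite -h m2K eqxx.
    by case: im2 => _ /(_ v vV); rewrite h ev eqxx.
Qed.

Lemma inv_eq (T : finType) (X Y : {set T}) F m : X = Y -> inv X F m -> inv Y F m.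
Proof. by move=> ->. Qed.

Lemma inv_union (T : finType) (F : {set {set T}}) (X1 X2 : {set T}) m1 m2 :
  inv X1 F m1 -> inv X2 F m2 -> [disjoint X1 & X2] -> exists m, inv (X1 :|: X2) F m.
Proof.
move=> [[a1 b1 c1] d1] [[a2 b2 c2] d2] dis.
have h1 : invo X1 m1 by [].
have h2 : invo X2 m2 by [].
have n21 : forall v, v \in X2 -> v \notin X1.
  by move=> v vX; apply/negP => vX1; move: dis; rewrite disjoint_subset => /subsetP /(_ v vX1); rewrite inE vX.
exists (fun v => if v \in X1 then m1 v else m2 v); split; [split|].
- by move=> v; rewrite inE negb_or => /andP[/negbTE -> /a2].
- move=> v; rewrite inE; case: ifP => vX /= vX'; [exact: b1 | exact: b2].
- move=> v /=; case: (boolP (v \in X1)) => vX.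
    by rewrite (invo_in h1 vX) c1.
  case: (boolP (v \in X2)) => vX2.
    by rewrite (negbTE (n21 _ (invo_in h2 vX2))) c2.
  by rewrite a2 // (negbTE vX) a2.
- move=> v; rewrite inE; case: ifP => vX /=; first by move=> _; apply: d1.
  by apply: d2.
Qed.

Lemma pair_clique (T : finType) (F : {set {set T}}) (X : {set T}) :
  ~~ odd #|X| -> (forall a b, a \in X -> b \in X -> a != b -> [set a; b] \in F) ->
  exists m, inv X F m.
Proof.
move: {2}#|X| (leqnn #|X|) => n; elim: n X => [|n IH] X hn ev cl.
  have X0 : X = set0 by apply/eqP; rewrite -cards_eq0; lia.
  exists id; split; [split|] => // v; rewrite X0 inE //.
case: (set_0Vmem X) => [X0|[a aX]].
  exists id; split; [split|] => // v; rewrite X0 inE //.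
have : #|X :\ a| > 0.
  move: ev; rewrite (cardsD1 a X) aX /= => ev; rewrite lt0n; apply/negP => /eqP e.
  by move: ev; rewrite e.
rewrite card_gt0 => /set0Pn[b]; rewrite in_setD1 => /andP[ba bX].
set X' := X :\: [set a; b].
have cX : #|X| = #|X'| + 2.
  rewrite (cardsD1 a X) aX (cardsD1 b (X :\ a)) in_setD1 ba bX.
  have -> : X :\ a :\ b = X' by apply/setP => v; rewrite !inE negb_or andbA [(_ != b) && _]andbC.
  lia.
have [m' [[m1 m2 m3] m4]] : exists m, inv X' F m.
  apply: IH; first lia.
    by move: ev; rewrite cX addn2 /=; case: (odd _).
  by move=> u w; rewrite !in_setD => /andP[_ uX] /andP[_ wX]; apply: cl.
have X'a : a \notin X' by rewrite !inE eqxx.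
have X'b : b \notin X' by rewrite !inE eqxx orbT.
have hm' : invo X' m' by [].
have mab : forall v, v != a -> v != b -> (m' v != a) && (m' v != b).
  move=> v va vb; case: (boolP (v \in X')) => vX.
    by have := invo_in hm' vX; rewrite !inE negb_or => /andP[/andP[-> ->]].
  by rewrite m1 // va vb.
exists (fun v => if v == a then b else if v == b then a else m' v); split; [split|].
- move=> v vX /=.
  have -> : (v == a) = false by apply/negbTE; apply: contraNneq vX => ->.
  have -> : (v == b) = false by apply/negbTE; apply: contraNneq vX => ->.
  by apply: m1; apply: contra vX; rewrite in_setD => /andP[].
- move=> v vX /=; case: (eqVneq v a) => [->|va]; first by [].
  case: (eqVneq v b) => [->|vb]; first by rewrite eq_sym.
  by apply: m2; rewrite !inE negb_or va vb.
- move=> v /=; case: (eqVneq v a) => [->|va]; first by rewrite (negbTE ba) eqxx.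
  case: (eqVneq v b) => [->|vb]; first by rewrite eqxx.
  by case/andP: (mab v va vb) => /negbTE -> /negbTE ->.
- move=> v vX /=; case: (eqVneq v a) => [->|va]; first by apply: cl; rewrite // eq_sym.
  case: (eqVneq v b) => [->|vb]; first by apply: cl.
  by apply: m4; rewrite !inE negb_or va vb.
Qed.

Lemma oddE n : odd n = (n %% 2 == 1). Proof. by rewrite modn2; case: odd. Qed.

Lemma cover_sub (T : finType) (P : {set {set T}}) C : C \in P -> C \subset cover P.
Proof. by move=> CP; apply: (bigcup_sup C CP). Qed.

Lemma build (T : finType) (F : {set {set T}}) n (P : {set {set T}}) (U : {set T}) :
  #|P| <= n -> trivIset P ->
  (forall C, C \in P -> forall a b, a \in C -> b \in C -> a != b -> [set a; b] \in F) ->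
  (forall u v, u \in U -> v \in cover P :|: U -> u != v -> [set u; v] \in F) ->
  [disjoint U & cover P] ->
  #|[set C in P | odd #|C|]| <= #|U| ->
  ~~ odd (#|cover P| + #|U|) ->
  exists m, inv (cover P :|: U) F m.
Proof.
elim: n P U => [|n IH] P U hn tP cl un dis odc par.
  have P0 : P = set0 by apply/eqP; rewrite -cards_eq0; lia.
  have c0 : cover P = set0 by rewrite P0 /cover big_set0.
  rewrite c0 set0U; apply: pair_clique; first by move: par; rewrite c0 cards0.
  by move=> a b aU bU ab; apply: un; rewrite // inE bU orbT.
case: (set_0Vmem P) => [P0|[C CP]].
  have c0 : cover P = set0 by rewrite P0 /cover big_set0.
  rewrite c0 set0U; apply: pair_clique; first by move: par; rewrite c0 cards0.
  by move=> a b aU bU ab; apply: un; rewrite // inE bU orbT.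
set P' := P :\ C.
have hn' : #|P'| <= n by move: hn; rewrite (cardsD1 C P) CP.
have tP' : trivIset P' by apply: trivIsetS tP; apply: subD1set.
have cov : cover P' = cover P :\: C := coverD1 tP CP.
have CsP := cover_sub CP.
have cardc : #|cover P| = #|C| + #|cover P'|.
  rewrite cov cardsD; have -> : cover P :&: C = C by apply/setIidPr.
  have := subset_leq_card CsP; lia.
have cl' : forall C0, C0 \in P' -> forall a b, a \in C0 -> b \in C0 -> a != b -> [set a; b] \in F.
  by move=> C0; rewrite in_setD1 => /andP[_ /cl].
have covP'P : cover P' \subset cover P by rewrite cov subsetDl.
have UC : forall v, v \in U -> v \notin cover P.
  by move=> v vU; apply/negP => vP; move: dis; rewrite disjoint_subset => /subsetP /(_ v vU); rewrite inE vP.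
have oddP' : [set D in P' | odd #|D|] = [set D in P | odd #|D|] :\ C.
  by apply/setP => D; rewrite !inE andbA.
case: (boolP (odd #|C|)) => oC.
-
  have oC1 : C \in [set D in P | odd #|D|] by rewrite inE CP oC.
  have U0 : 0 < #|U|.
    by apply: leq_trans odc; rewrite card_gt0; apply/set0Pn; exists C.
  move: U0; rewrite card_gt0 => /set0Pn[u uU].
  have : 0 < #|C| by move: oC; case: #|C|.
  rewrite card_gt0 => /set0Pn[r rC].
  have ru : r != u by apply: contraNneq (UC u uU) => <-; apply: (subsetP CsP).
  set C' := C :\ r.
  set U' := U :\ u.
  have [mC' hC'] : exists m, inv C' F m.
    apply: pair_clique.
      by move: oC; rewrite (cardsD1 r C) rC /=; case: odd.
    move=> a b; rewrite /C' !in_setD1 => /andP[_ aC] /andP[_ bC]; exact: (cl C CP a b aC bC).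
  have [mru hru] : exists m, inv [set r; u] F m.
    apply: pair_clique; first by rewrite cards2 ru.
    have Fur : [set u; r] \in F.
      apply: un => //; first by rewrite inE (subsetP CsP).
      by rewrite eq_sym.
    move=> a b; rewrite !in_set2 => /orP[] /eqP -> /orP[] /eqP -> //; rewrite ?eqxx //.
      by rewrite setUC.
  have [m' hm'] : exists m, inv (cover P' :|: U') F m.
    apply: IH => //.
    - move=> u0 v u0U vP u0v; apply: un => //; first by move: u0U; rewrite in_setD1 => /andP[].
      move: vP; rewrite !inE => /orP[vP|/andP[_ ->]]; last by rewrite orbT.
      by rewrite (subsetP covP'P v vP).
    - rewrite disjoint_subset; apply/subsetP => v; rewrite in_setD1 => /andP[_ vU].
      by rewrite inE; apply: contra (UC v vU); apply: (subsetP covP'P).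
    - rewrite oddP' /U'; move: odc; rewrite (cardsD1 C [set D in P | odd #|D|]) oC1 (cardsD1 u U) uU.
      by move=> h; lia.
    - move: par; rewrite cardc /U' (cardsD1 u U) uU !oddE; move: oC; rewrite oddE; lia.
  have [m1 h1] : exists m, inv (C' :|: [set r; u]) F m.
    apply: (inv_union hC' hru). rewrite disjoint_subset; apply/subsetP => v.
    rewrite /C' in_setD1 => /andP[vr vC]; rewrite !inE negb_or vr /=.
    by apply: contraTneq vC => ->; apply: contra (UC u uU); apply: (subsetP CsP).
  have rP := subsetP CsP r rC.
  have rU : r \notin U := contraL (UC r) rP.
  have uP : u \notin cover P := UC u uU.
  have uC : u \notin C := contra (subsetP CsP u) uP.
  have dj : [disjoint C' :|: [set r; u] & cover P' :|: U'].
    rewrite disjoint_subset; apply/subsetP => v; rewrite /C' /U' !inE cov !inE.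
    case: (eqVneq v r) => [->|vr] /=; first by rewrite rC /= (negbTE rU) andbF.
    case: (eqVneq v u) => [->|vu] /=; first by rewrite (negbTE uP) andbF.
    rewrite orbF => vC; rewrite vC /=.
    exact: (contraL (UC v) (subsetP CsP v vC)).
  have [m2 h2] := inv_union h1 hm' dj.
  exists m2; apply: inv_eq h2; apply/setP => v.
  rewrite /C' /U' !inE cov !inE.
  case: (eqVneq v r) => [->|vr] /=; first by rewrite rP.
  case: (eqVneq v u) => [->|vu] /=; first by rewrite uU !orbT.
  rewrite orbF; case: (boolP (v \in C)) => vC /=; first by rewrite (subsetP CsP v vC).
  by [].
-
  have [mC hC] : exists m, inv C F m by apply: pair_clique => //; apply: cl.
  have [m' hm'] : exists m, inv (cover P' :|: U) F m.
    apply: IH => //.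
    - move=> u0 v u0U vP u0v; apply: un => //.
      move: vP; rewrite !inE => /orP[vP|->]; last by rewrite orbT.
      by rewrite (subsetP covP'P v vP).
    - rewrite disjoint_subset; apply/subsetP => v vU.
      by rewrite inE; apply: contra (UC v vU); apply: (subsetP covP'P).
    - apply: leq_trans odc; apply: subset_leq_card; rewrite oddP'; exact: subD1set.
    - move: par; rewrite cardc !oddE; move: oC; rewrite oddE; lia.
  have dj : [disjoint C & cover P' :|: U].
    rewrite disjoint_subset; apply/subsetP => v vC; rewrite !inE cov !inE vC /=.
    exact: (contraL (UC v) (subsetP CsP v vC)).
  have [m2 h2] := inv_union hC hm' dj.
  exists m2; apply: inv_eq h2; apply/setP => v.
  rewrite !inE cov !inE.
  case: (boolP (v \in C)) => vC /=; first by rewrite (subsetP CsP v vC).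
  by [].
Qed.

Lemma card_sep (T : finType) (B : {set T}) (p : pred T) :
  #|[set t in B | p t]| = \sum_(t in B) p t.
Proof.
rewrite -sum1_card big_mkcond /= [RHS]big_mkcond /=.
by apply: eq_bigr => t _; rewrite inE; case: (t \in B); case: (p t).
Qed.

Lemma double_count (T : finType) (X : {set {set T}}) (S : {set T}) :
  \sum_(e in X) #|e :&: S| = \sum_(t in S) #|[set e in X | t \in e]|.
Proof.
have -> : \sum_(e in X) #|e :&: S| = \sum_(e in X) \sum_(t in S) (t \in e).
  apply: eq_bigr => e _; rewrite -card_sep; apply: eq_card => t; rewrite !inE andbC.
  by [].
rewrite exchange_big /=; apply: eq_bigr => t _; by rewrite card_sep.
Qed.

Lemma adj_sym (T : finType) (A : {set {set T}}) : symmetric (adj A).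
Proof. by move=> a b; rewrite /adj setUC. Qed.

Lemma connect_h (T : finType) (Y : finType) (A : {set {set T}}) (h : T -> Y) :
  (forall a b, adj A a b -> h a = h b) -> forall a b, connect (adj A) a b -> h a = h b.
Proof.
move=> H a b /connectP[p pth ->]; elim: p a pth => [|c p IH] a //= /andP[ac pth].
by rewrite (H _ _ ac) IH.
Qed.

Lemma comp_lb (T : finType) (Y : finType) (A : {set {set T}}) (h : T -> Y) :
  (forall a b, adj A a b -> h a = h b) -> #|[set h t | t in T]| <= ncomp A.
Proof.
move=> H; have cs := sym_connect_sym (adj_sym A).
have sub : [set h t | t in T] \subset [set h r | r in [pred r | roots (adj A) r]].
  apply/subsetP => y /imsetP[t _ ->]; apply/imsetP; exists (fingraph.root (adj A) t).
    by rewrite inE; apply: roots_root.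
  by apply: connect_h H _ _ (connect_root _ t).
apply: leq_trans (subset_leq_card sub) _; apply: leq_trans (leq_imset_card _ _) _.
unfold ncomp, n_comp_mem; apply: subset_leq_card; apply/subsetP => r. by rewrite !inE /= => ->.
Qed.

Lemma ncomp_le (T : finType) (A : {set {set T}}) : ncomp A <= #|T|.
Proof. exact: max_card. Qed.

Lemma ncomp_conn (T : finType) (E : {set {set T}}) (t0 : T) :
  connected_graph E -> ncomp E = 1.
Proof.
move=> cE; have cs := sym_connect_sym (adj_sym E).
unfold ncomp, n_comp_mem; apply/eqP; rewrite eqn_leq; apply/andP; split.
  rewrite -(cards1 (fingraph.root (adj E) t0)); apply: subset_leq_card; apply/subsetP => r.
  rewrite !inE => /andP[/eqP rr _]; rewrite -rr; apply/eqP; apply/eqP.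
  by rewrite (root_connect cs); apply: cE.
rewrite lt0n; apply/negP => /eqP /card0_eq /(_ (fingraph.root (adj E) t0)).
by rewrite !inE /= roots_root.
Qed.

Lemma ncomp_edge (T : finType) (A : {set {set T}}) a b :
  [set a; b] \in A -> a != b -> ncomp A <= #|T| - 1.
Proof.
move=> ab anb; have cs := sym_connect_sym (adj_sym A).
have cab : connect (adj A) a b by apply: connect1.
have [x xr] : exists x, ~~ roots (adj A) x.
  case: (boolP (roots (adj A) a)) => ra; last by exists a.
  case: (boolP (roots (adj A) b)) => rb; last by exists b.
  move: anb; rewrite -(eqP ra) -(eqP rb); move: (cab); rewrite -(root_connect cs) => ->.
  by [].
unfold ncomp, n_comp_mem.
have : #|predI (roots (adj A)) (mem T)| <= #|[set~ x]|.
  by apply: subset_leq_card; apply/subsetP => y; rewrite !inE => /andP[ry _]; apply: contraNneq xr => <-.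
by rewrite cardsC1 subn1.
Qed.
Import Order.TTheory GRing.Theory Num.Theory.

Lemma odd_sum_card (T : finType) (P : {set {set T}}) :
  odd (\sum_(C in P) #|C|) = odd #|[set C in P | odd #|C|]|.
Proof.
rewrite card_sep; elim/big_rec2: _ => [//|C y1 y2 _ h].
by rewrite !oddD h; case: (odd #|C|).
Qed.

Lemma rho_le (a b c d : nat) : 0 < b -> 0 < d ->
  ((a%:R / b%:R : rat) <= c%:R / d%:R)%R -> a * d <= c * b.
Proof.
move=> b0 d0; rewrite ler_pdivrMr ?ltr0n // mulrAC ler_pdivlMr ?ltr0n //.
by rewrite -!natrM ler_nat.
Qed.

Lemma handshake (T : finType) (E : {set {set T}}) k :
  simple_graph E -> (forall v, deg E v = k) -> 2 * #|E| = k * #|T|.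
Proof.
move=> sE dE; have := double_count E [set: T].
have -> : \sum_(e in E) #|e :&: [set: T]| = \sum_(e in E) 2.
  by apply: eq_bigr => e eE; rewrite setIT sE.
have -> : \sum_(t in [set: T]) #|[set e in E | t \in e]| = \sum_(t in [set: T]) k.
  by apply: eq_bigr => t _; rewrite -(dE t).
by rewrite !sum_nat_const cardsT mulnC => ->; rewrite mulnC.
Qed.

Lemma deg_bound (T : finType) (E X : {set {set T}}) k (S : {set T}) :
  X \subset E -> (forall e, e \in X -> e :&: S != set0) -> (forall v, deg E v = k) ->
  #|X| <= k * #|S|.
Proof.
move=> XE XS dE.
have h1 : #|X| <= \sum_(e in X) #|e :&: S|.
  rewrite -sum1_card; apply: leq_sum => e eX; rewrite card_gt0; exact: XS.
apply: leq_trans h1 _; rewrite double_count.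
have h2 : \sum_(t in S) #|[set e in X | t \in e]| <= \sum_(t in S) k.
  apply: leq_sum => t _; rewrite -(dE t); apply: subset_leq_card.
  by apply/subsetP => e; rewrite !inE => /andP[/(subsetP XE) -> ->].
by apply: leq_trans h2 _; rewrite sum_nat_const mulnC.
Qed.

Lemma count_P (T : finType) (E : {set {set T}}) k (V U : {set T}) (P : {set {set T}}) :
  simple_graph E -> connected_graph E -> (forall v, deg E v = k) -> uniformly_dense E ->
  0 < k -> 1 < #|T| -> U \subset V -> #|~: V| <= 1 ->
  partition P (V :\: U) ->
  (forall a b, [set a; b] \in E -> a \in V :\: U -> b \in V :\: U -> pblock P a = pblock P b) ->
  #|P| <= #|U| + 1.
Proof.
move=> sE cE dE uE k0 n1 UV V1 partP Hcls.
set D := V :\: U.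
case/and3P: partP => /eqP covP tP P0; rewrite -/D in covP.
pose h t := if t \in D then pblock P t else [set t].
pose S := ~: D.
pose A := [set e in E | e \subset D].
have hconst : forall a b, adj A a b -> h a = h b.
  move=> a b; rewrite /adj inE => /andP[abE abD].
  have aD : a \in D := subsetP abD a (set21 a b).
  have bD : b \in D := subsetP abD b (set22 a b).
  by rewrite /h aD bD; apply: Hcls.
have lb : #|P| + #|S| <= ncomp A.
  apply: leq_trans (comp_lb hconst).
  have sub : P :|: [set [set t] | t in S] \subset [set h t | t in T].
    apply/subsetP => C; rewrite inE => /orP[CP|/imsetP[t tS ->]].
      have : C != set0 by apply: contraNneq P0 => <-.
      case/set0Pn => a aC.
      have aD : a \in D by rewrite -covP; apply/bigcupP; exists C.
      by apply/imsetP; exists a => //; rewrite /h aD (def_pblock tP CP aC).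
    by apply/imsetP; exists t => //; rewrite /h; move: tS; rewrite inE => /negbTE ->.
  apply: leq_trans (subset_leq_card sub).
  rewrite cardsU card_imset; last exact: set1_inj.
  have -> : P :&: [set [set t] | t in S] = set0.
    apply/setP => C; rewrite !inE; apply/negP => /andP[CP /imsetP[t tS Ct]].
    have : t \in cover P by apply/bigcupP; exists C; rewrite // Ct set11.
    by rewrite covP; move: tS; rewrite inE => /negbTE ->.
  by rewrite cards0 subn0.
have sS : #|S| = #|~: V| + #|U|.
  have h1 := cardsC D; have h2 := cardsC V.
  have h3 : #|D| = #|V| - #|U| by rewrite /D cardsD (setIidPr UV).
  have := subset_leq_card UV; rewrite /S; lia.
have [t0 _] : exists t0 : T, t0 \in T.
  by apply/card_gt0P; apply: ltnW.
case: (posnP #|S|) => s0.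
  have AE : A = E.
    apply/setP => e; rewrite inE; case eE: (e \in E) => //=; apply/subsetP => t _.
    move: s0 => /eqP; rewrite cards_eq0 => /eqP /setP /(_ t); rewrite !inE.
    by move/negbFE.
  move: lb; rewrite AE (ncomp_conn t0 cE) s0; lia.
suff : #|P| <= #|S| by rewrite sS; lia.
have hs := handshake sE dE.
have hEA : #|E| <= #|A| + k * #|S|.
  have -> : #|E| = #|A| + #|E :\: A|.
    have AsE : A \subset E by apply/subsetP => e; rewrite inE => /andP[].
    by rewrite -(cardsID A E) (setIidPr AsE).
  rewrite leq_add2l; apply: deg_bound dE; first exact: subsetDl.
  move=> e; rewrite !inE => /andP[eA eE]; rewrite eE /= in eA.
  case/subsetPn: eA => t te tD; apply/set0Pn; exists t; by rewrite in_setI te in_setC tD.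
have hc := ncomp_le A.
case: (set_0Vmem A) => [A0|[e eA]].
  move: hEA; rewrite A0 cards0 add0n => hEA.
  have : k * #|T| <= k * (2 * #|S|) by nia.
  rewrite leq_pmul2l // => h2; move: lb; lia.
have eE : e \in E by move: eA; rewrite inE => /andP[].
have := sE e eE => /eqP /cards2P [x [y [xy exy]]].
have hc1 : ncomp A <= #|T| - 1 by apply: (@ncomp_edge _ A x y) => //; rewrite -exy.
have AE : A \subset E by apply/subsetP => f; rewrite inE => /andP[].
have An0 : A != set0 by apply/set0Pn; exists e.
have := uE A AE An0; rewrite /rho /grank (ncomp_conn t0 cE).
move/rho_le => /(_ ltac:(lia) ltac:(lia)) hr.
rewrite leqNgt; apply/negP => hP.
have hc2 : 2 * #|S| + 1 <= ncomp A by lia.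
nia.
Qed.

Lemma arith1 o u v : o <= u + 1 -> (v - u) %% 2 = o %% 2 -> v %% 2 = 0 -> u <= v -> o <= u.
Proof. lia. Qed.

Lemma final (T : finType) (E : {set {set T}}) k (V : {set T}) (EV : {set {set T}}) :
  simple_graph E -> connected_graph E -> (forall v, deg E v = k) -> uniformly_dense E ->
  0 < k -> 1 < #|T| ->
  EV \subset E -> (forall e, e \in E -> e \subset V -> e \in EV) ->
  #|~: V| <= 1 -> ~~ odd #|V| ->
  forall F : {set {set T}}, EV \subset F -> valid V F -> transb V F -> exists m, inv V F m.
Proof.
move=> sE cE dE uE k0 n1 EVE EEV V1 Vev F EVF vF tF.
set U := univ V F.
set D := V :\: U.
have UV : U \subset V by apply/subsetP => u; rewrite inE => /andP[].
pose R := [rel a b | (a == b) || ([set a; b] \in F)].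
have Rsym : forall a b, R a b = R b a by move=> a b /=; rewrite eq_sym setUC.
have Rtrans : forall a b c, a \in D -> b \in D -> c \in D -> R a b -> R b c -> R a c.
  move=> a b c aD bD cD /= /orP[/eqP ->|ab]; first by [].
  case/orP => [/eqP <-|bc]; first by rewrite ab orbT.
  case: (eqVneq a c) => [->|ac] //=.
  by move/forallP: tF => /(_ a) /forallP /(_ b) /forallP /(_ c); rewrite aD bD cD ab bc ac /=; apply.
have eqR : {in D & &, equivalence_rel R}.
  move=> x y z xD yD zD; split; first by rewrite /= eqxx.
  move=> xy; apply/idP/idP => h.
    by apply: (Rtrans y x z) => //; rewrite Rsym.
  exact: (Rtrans x y z).
pose P := equivalence_partition R D.
have partP : partition P D := equivalence_partitionP eqR.
have partP' := partP.
case/and3P: partP' => /eqP covP tP P0.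
have pbR : forall a b, a \in D -> b \in D -> (b \in pblock P a) = R a b.
  by move=> a b aD bD; apply: pblock_equivalence_partition.
have Hcls : forall a b, [set a; b] \in E -> a \in D -> b \in D -> pblock P a = pblock P b.
  move=> a b abE aD bD.
  have abF : [set a; b] \in F.
    apply: (subsetP EVF); apply: EEV => //; apply/subsetP => t; rewrite in_set2.
    by case/orP => /eqP ->; [move: aD | move: bD]; rewrite inE => /andP[].
  apply: esym; apply: same_pblock => //; rewrite pbR //= abF orbT //.
have cP := count_P sE cE dE uE k0 n1 UV V1 partP Hcls.
have cardD : #|D| = #|V| - #|U| by rewrite /D cardsD (setIidPr UV).
have hUV := subset_leq_card UV.
have sumP : \sum_(C in P) #|C| = #|D| by rewrite -covP; apply/eqP.
have oddc := odd_sum_card P; rewrite sumP in oddc.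
have leo : #|[set C in P | odd #|C|]| <= #|P| by apply: subset_leq_card; apply/subsetP => C; rewrite inE => /andP[].
have [m hm] : exists m, inv (cover P :|: U) F m.
  apply: (@build _ F #|P|) => //.
  - move=> C CP a b aC bC ab.
    have aD : a \in D by rewrite -covP; apply/bigcupP; exists C.
    have bD : b \in D by rewrite -covP; apply/bigcupP; exists C.
    have : b \in pblock P a by rewrite (def_pblock tP CP aC).
    by rewrite pbR //= (negbTE ab).
  - move=> u v uU vPU uv.
    have vV : v \in V.
      move: vPU; rewrite inE covP => /orP[|/(subsetP UV) //].
      by rewrite inE => /andP[].
    move: uU; rewrite inE => /andP[_ /forallP /(_ v)].
    by rewrite vV eq_sym uv.
  - by rewrite covP disjoint_subset; apply/subsetP => u uU; rewrite inE /D in_setD uU.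
  - have e2 : (#|V| - #|U|) %% 2 = #|[set C in P | odd #|C|]| %% 2 by rewrite !modn2 -cardD oddc.
    have e3 : #|V| %% 2 = 0 by rewrite modn2; move: Vev; case: odd.
    exact: (arith1 (leq_trans leo cP) e2 e3 hUV).
  - rewrite covP cardD oddE; have e3 : #|V| %% 2 = 0 by rewrite modn2; move: Vev; case: odd.
    apply/negP => /eqP; lia.
exists m; apply: inv_eq hm; rewrite covP; apply/setP => v; rewrite !inE.
by case: (v \in V); case: [forall w in V, _].
Qed.

Lemma inv_to_pm (T : finType) (V : {set T}) (F : {set {set T}}) m :
  inv V F m -> perfect_matching V F [set [set v; m v] | v in V].
Proof.
case=> [[m1 m2 m3] m4]; split.
  by apply/subsetP => e /imsetP[v vV ->]; apply: m4.
move=> x xV.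
suff -> : [set e in [set [set v; m v] | v in V] | x \in e] = [set [set x; m x]] by rewrite cards1.
apply/setP => e; rewrite !inE; apply/idP/idP.
  case/andP => /imsetP[v vV ->]; rewrite in_set2 => /orP[] /eqP ->; first by [].
  by rewrite m3 setUC.
move=> /eqP ->; rewrite set21 andbT; apply/imsetP; exists x => //.
Qed.

Lemma inv_empty (T : finType) (V : {set T}) (F : {set {set T}}) : V = set0 -> exists m, inv V F m.
Proof. by move=> ->; exists id; split; [split|] => // v; rewrite inE. Qed.

Unset Implicit Arguments.
Theorem corollary3p14 (T : finType) (E : {set {set T}}) :
  simple_graph E -> connected_graph E -> regular E -> uniformly_dense E ->
  (exists M, perfect_matching [set: T] E M) \/
  (forall v : T, exists M, perfect_matching [set~ v] (del_vertex_edges E v) M).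
Proof.
move=> sE cE [k dE] uE.
case: (leqP #|T| 1) => n1.
  case: (boolP (odd #|T|)) => on.
    right => v; have [m hm] : exists m, inv [set~ v] (del_vertex_edges E v) m.
      apply: inv_empty; apply/eqP; rewrite -cards_eq0 cardsC1.
      by move: on n1; case: #|T| => [|[|]].
    by exists [set [set t; m t] | t in [set~ v]]; apply: inv_to_pm.
  left; have [m hm] : exists m, inv [set: T] E m.
    apply: inv_empty; apply/eqP; rewrite -cards_eq0 cardsT.
    by move: on n1; case: #|T| => [|[|]].
  by exists [set [set t; m t] | t in [set: T]]; apply: inv_to_pm.
have [x _] : exists x : T, x \in T by apply/card_gt0P; apply: ltnW.
have : 0 < #|[set~ x]| by rewrite cardsC1; lia.
case/card_gt0P => y; rewrite !inE => yx.
have k0 : 0 < k.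
  move: (cE x y) => /connectP[[|c p] /=]; first by move=> _ e; rewrite e eqxx in yx.
  case/andP => xc _ _; rewrite -(dE x) card_gt0; apply/set0Pn; exists [set x; c].
  by rewrite inE set21 andbT.
case: (boolP (odd #|T|)) => on.
- right => v.
  have vEV : valid [set~ v] (del_vertex_edges E v).
    move=> e; rewrite inE => /andP[eE ve]; rewrite sE // eqxx /=.
    by apply/subsetP => t te; rewrite !inE; apply: contraNneq ve => <-.
  have h1 : del_vertex_edges E v \subset E by apply/subsetP => e; rewrite inE => /andP[].
  have h2 : forall e, e \in E -> e \subset [set~ v] -> e \in del_vertex_edges E v.
    move=> e eE eV; rewrite inE eE /=; apply/negP => ve.
    by move: (subsetP eV v ve); rewrite !inE eqxx.
  have h3 : #|~: [set~ v]| <= 1 by rewrite setCK cards1.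
  have h4 : ~~ odd #|[set~ v]| by rewrite cardsC1; move: on; case: #|T| => //= n; rewrite negbK.
  have [m hm] := maximal vEV (final sE cE dE uE k0 n1 h1 h2 h3 h4).
  by exists [set [set t; m t] | t in [set~ v]]; apply: inv_to_pm.
- left.
  have vE : valid [set: T] E by move=> e eE; rewrite sE // eqxx subsetT.
  have h3 : #|~: [set: T]| <= 1 by rewrite setCT cards0.
  have h4 : ~~ odd #|[set: T]| by rewrite cardsT.
  have [m hm] := maximal vE (final sE cE dE uE k0 n1 (subxx E) (fun e eE _ => eE) h3 h4).
  by exists [set [set t; m t] | t in [set: T]]; apply: inv_to_pm.
Qed.
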